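(* Let $C$ be a closed, regular cone with nonempty interior in a real Banach space. Let $f:\operatorname{int}C\to\operatorname{int}C$ be order-preserving and subhomogeneous. Then the limit $f_\infty(x)=\lim_{t\to\infty}t^{-1}f(tx)$ exists for every $x\in\operatorname{int}C$, the map $f_\infty:\operatorname{int}C\to C$ is order-preserving and homogeneous, and $r(f)=r(f_\infty)$.
   Context: A closed cone $C$ (closed convex, $\lambda C\subseteq C$ for $\lambda\ge0$, $C\cap(-C)=\{0\}$) induces the order $x\le y$ iff $y-x\in C$; $C$ is regular if every decreasing sequence in $C$ converges. $f$ is order-preserving if $x\le y\Rightarrow f(x)\le f(y)$; homogeneous if $f(tx)=tf(x)$ for all $t>0$; subhomogeneous if $f(tx)\le tf(x)$ for all $t\ge1$. For $g:\operatorname{int}C\to C$, $r(g)=\inf_{x\in\operatorname{int}C}M(g(x)/x)$ where $M(x/y)=\inf\{\beta>0:x\le\beta y\}$. *)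

(* Defs.v *)
From HB Require Import structures.
From mathcomp Require Import all_boot all_order all_algebra.
From mathcomp Require Import all_classical all_reals all_analysis.
Set Implicit Arguments. Unset Strict Implicit. Unset Printing Implicit Defensive.
Import Order.TTheory GRing.Theory Num.Theory.
Import numFieldNormedType.Exports.
Local Open Scope classical_set_scope.
Local Open Scope ring_scope.

Section Cones.
Context {R : realType} {V : normedModType R}.

Definition is_closed_cone (C : set V) : Prop :=
  [/\ closed C,
      (forall x y (t : R), C x -> C y -> 0 <= t <= 1 -> C (t *: x + (1 - t) *: y)),
      (forall x (l : R), C x -> 0 <= l -> C (l *: x)) &
      (forall x, C x -> C (- x) -> x = 0)].

Definition cle (C : set V) (x y : V) : Prop := C (y - x).

Definition regular_cone (C : set V) : Prop :=
  forall u : nat -> V, (forall n, C (u n)) ->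
    (forall n, cle C (u n.+1) (u n)) -> exists l : V, u @ \oo --> l.

Definition order_preserving_on (C : set V) (f : V -> V) : Prop :=
  forall x y, interior C x -> interior C y -> cle C x y -> cle C (f x) (f y).

Definition homogeneous_on (C : set V) (f : V -> V) : Prop :=
  forall x (t : R), interior C x -> 0 < t -> f (t *: x) = t *: f x.

Definition subhomogeneous_on (C : set V) (f : V -> V) : Prop :=
  forall x (t : R), interior C x -> 1 <= t -> cle C (f (t *: x)) (t *: f x).

Definition Mcone (C : set V) (x y : V) : R :=
  inf [set b : R | 0 < b /\ cle C x (b *: y)].

Definition rcone (C : set V) (g : V -> V) : R :=
  inf [set Mcone C (g x) x | x in interior C].

End Cones.

(* Main.v *)
Require Import Defs.
From HB Require Import structures.
From mathcomp Require Import all_boot all_order all_algebra.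
From mathcomp Require Import all_classical all_reals all_analysis.
From mathcomp Require Import ring lra.
Import Order.TTheory GRing.Theory Num.Theory.
Import numFieldNormedType.Exports.
Local Open Scope classical_set_scope.
Local Open Scope ring_scope.
Set Implicit Arguments. Unset Strict Implicit.

Section Aux.
Context (R : realType) (V : completeNormedModType R) (C : set V).
Hypothesis HC : is_closed_cone C.

Lemma cone_scale {x} {l : R} : C x -> 0 <= l -> C (l *: x).
Proof. by case: HC => _ _ H _; apply: H. Qed.

Lemma cone_add {x y} : C x -> C y -> C (x + y).
Proof.
case: HC => _ Hconv Hs _ Cx Cy.
have h : C (2^-1 *: x + (1 - 2^-1) *: y).
  by apply: Hconv => //; apply/andP; split; [rewrite invr_ge0 | rewrite invf_le1]; lra.
have -> : x + y = 2 *: (2^-1 *: x + (1 - 2^-1) *: y).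
  have -> : (1 - 2^-1 : R) = 2^-1 by field.
  by rewrite scalerDr !scalerA divff ?scale1r // pnatr_eq0.
by apply: Hs.
Qed.

Lemma cle_trans x y z : cle C x y -> cle C y z -> cle C x z.
Proof.
rewrite /cle => h1 h2; have := cone_add h2 h1.
by rewrite addrA subrK.
Qed.

Lemma cone_lim {T} (F : set_system T) {FF : ProperFilter F} (u : T -> V) l :
  (\forall t \near F, C (u t)) -> u @ F --> l -> C l.
Proof. case: HC => Hcl _ _ _ H hl. have := (closed_cvg C Hcl H). apply. exact: hl. Qed.

Lemma intP x : interior C x -> exists2 r : R, 0 < r & forall y, `|x - y| < r -> C y.
Proof. by move=> /nbhs_normP[r r0 H]; exists r => // y hy; apply: H. Qed.

Lemma int_scale x (t : R) : interior C x -> 0 < t -> interior C (t *: x).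
Proof.
move=> /intP[r r0 H] t0; apply/nbhs_normP; exists (t * r); first exact: mulr_gt0.
move=> y /= hy.
have -> : y = t *: (t^-1 *: y) by rewrite scalerA divff ?scale1r // gt_eqF.
apply: cone_scale (ltW t0); apply: H.
have -> : x - t^-1 *: y = t^-1 *: (t *: x - y).
  by rewrite scalerBr scalerA mulVf ?scale1r // gt_eqF.
rewrite normrZ gtr0_norm ?invr_gt0 // ltr_pdivrMl //.
Qed.

Lemma int_dom {x} {e : R} : interior C x -> 0 < e ->
  exists2 d : R, 0 < d & forall v, `|v| < d -> C (e *: x - v).
Proof.
move=> /intP[r r0 H] e0; exists (r * e); first exact: mulr_gt0.
move=> v hv.
have -> : e *: x - v = e *: (x - e^-1 *: v).
  by rewrite scalerBr scalerA divff ?scale1r // gt_eqF.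
apply: cone_scale (ltW e0); apply: H.
rewrite opprB addrC subrK normrZ gtr0_norm ?invr_gt0 // ltr_pdivrMl //.
by rewrite mulrC.
Qed.

Lemma int_bound x c : interior C x -> exists2 b : R, 0 < b & C (b *: x - c).
Proof.
move=> Hx; have [d d0 Hd] := int_dom Hx ltr01.
pose s := d / (`|c| + 1).
have s0 : 0 < s by rewrite divr_gt0 // ltr_wpDl.
have h : C (1 *: x - s *: c).
  apply: Hd; rewrite normrZ gtr0_norm //.
  by rewrite /s mulrAC ltr_pdivrMr ?ltr_wpDl // ltr_pM2l // ltrDl.
rewrite scale1r in h.
exists (s^-1); first by rewrite invr_gt0.
have -> : s^-1 *: x - c = s^-1 *: (x - s *: c).
  by rewrite scalerBr scalerA mulVf ?scale1r // gt_eqF.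
by apply: cone_scale; rewrite // invr_ge0 ltW.
Qed.

End Aux.

Section Main.
Context (R : realType) (V : completeNormedModType R) (C : set V) (f : V -> V).
Hypothesis HC : is_closed_cone C.
Hypothesis Hreg : regular_cone C.
Hypothesis Hf : forall x, interior C x -> interior C (f x).
Hypothesis Hop : order_preserving_on C f.
Hypothesis Hsh : subhomogeneous_on C f.

Definition gg x (t : R) := t^-1 *: f (t *: x).

Lemma gg_in x t : interior C x -> 0 < t -> C (gg x t).
Proof.
move=> Hx t0; apply: (cone_scale HC); last by rewrite invr_ge0 ltW.
apply: interior_subset; apply: Hf; exact: int_scale.
Qed.

Lemma gg_dec x t s : interior C x -> 0 < t -> t <= s -> C (gg x t - gg x s).
Proof.
move=> Hx t0 ts.
have s0 : 0 < s by apply: lt_le_trans ts.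
have st : 1 <= s / t by rewrite ler_pdivlMr // mul1r.
have h := Hsh (int_scale HC Hx t0) st.
rewrite /cle scalerA mulrAC -mulrA divff ?gt_eqF // mulr1 in h.
have si : 0 <= s^-1 by rewrite invr_ge0 ltW.
have := cone_scale HC h si.
by rewrite /gg scalerBr scalerA mulrA mulVf ?gt_eqF // mul1r.
Qed.


Lemma gg_ge x L t : interior C x -> gg x @ +oo --> L -> 0 < t -> C (gg x t - L).
Proof.
move=> Hx hL t0.
apply: (cone_lim HC (F := +oo) (u := fun s => gg x t - gg x s)).
  apply: filterS (nbhs_pinfty_gt (num_real t)) => s ts.
  exact: gg_dec (ltW ts).
exact: cvgB (cvg_cst _) hL.
Qed.

Lemma gg_lim x : interior C x -> exists L : V, gg x @ +oo --> L.
Proof.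
move=> Hx.
pose u n := gg x (n.+1%:R).
have uC n : C (u n) by apply: gg_in.
have udec n : cle C (u n.+1) (u n) by apply: gg_dec => //; rewrite ler_nat.
have [L hL] := Hreg uC udec.
have Llow t : 0 < t -> C (gg x t - L).
  move=> t0.
  apply: (cone_lim HC (F := \oo) (u := fun n => gg x t - u n)).
    apply: filterS (nbhs_infty_ge (Num.truncn t)) => n tn.
    apply: gg_dec => //.
    apply: ltW; apply: (lt_le_trans (y := (Num.truncn t).+1%:R)).
      by rewrite -truncn_lt_nat ?ltW.
    by rewrite ler_nat.
  exact: cvgB (cvg_cst _) hL.
exists L; apply/cvgrPdist_lt => e e0.
apply: contrapT => Hn.
have Hb : forall M : R, exists t, M < t /\ e <= `|L - gg x t|.
  move=> M; apply: contrapT => Hm; apply: Hn.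
  exists M; split; first exact: num_real.
  move=> t Mt; rewrite ltNge; apply/negP => et; apply: Hm; by exists t.
have [h Hh] := choice Hb.
pose t := fix tt k := if k is k'.+1 then h (tt k' + 1) else h 1.
have tS k : t k.+1 = h (t k + 1) by [].
have tbad k : e <= `|L - gg x (t k)| by case: k => [|k]; apply: (Hh _).2.
have tge k : k.+1%:R <= t k.
  elim: k => [|k IH]; first by apply: ltW; apply: (Hh 1).1.
  rewrite tS; apply: ltW; apply: le_lt_trans (Hh _).1.
  by rewrite -addn1 natrD lerD2r.
have tpos k : 0 < t k by apply: lt_le_trans (tge k); rewrite ltr0n.
have tinc k : t k <= t k.+1.
  rewrite tS; apply: ltW; apply: lt_trans (Hh _).1; by rewrite ltrDl.
pose w k := gg x (t k).
have wC k : C (w k) by apply: gg_in.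
have wdec k : cle C (w k.+1) (w k) by apply: gg_dec.
have [L' hL'] := Hreg wC wdec.
have h1 : C (L - L').
  have un n : C (u n - L').
    apply: (cone_lim HC (F := \oo) (u := fun k => u n - w k)).
      apply: filterS (nbhs_infty_ge n) => k nk.
      apply: gg_dec => //; apply: le_trans (tge k); by rewrite ler_nat.
    exact: cvgB (cvg_cst _) hL'.
  apply: (cone_lim HC (F := \oo) (u := fun n => u n - L')).
    exact: nearW.
  exact: cvgB hL (cvg_cst _).
have h2 : C (L' - L).
  apply: (cone_lim HC (F := \oo) (u := fun k => w k - L)).
    by apply: nearW => k; apply: Llow.
  exact: cvgB hL' (cvg_cst _).
have LL : L = L'.
  case: HC => _ _ _ Hp; apply/eqP; rewrite -subr_eq0; apply/eqP.
  by apply: Hp => //; rewrite opprB.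
subst L'.
move/cvgrPdist_lt: hL' => /(_ e e0) H.
have [N _ HN] := H.
have := HN N (leqnn N).
by rewrite ltNge tbad.
Qed.

Definition finf x := lim (gg x @ +oo).

Lemma finf_cvg x : interior C x -> gg x @ +oo --> finf x.
Proof. by move=> Hx; have [L hL] := gg_lim Hx; rewrite /finf (cvg_lim _ hL). Qed.

Lemma finf_in x : interior C x -> C (finf x).
Proof.
move=> Hx; apply: (cone_lim HC _ (finf_cvg Hx)).
apply: filterS (nbhs_pinfty_gt (num_real 0)) => t t0; exact: gg_in.
Qed.

Lemma finf_le x : interior C x -> C (f x - finf x).
Proof.
move=> Hx; have := gg_ge Hx (finf_cvg Hx) ltr01.
by rewrite /gg invr1 !scale1r.
Qed.

Lemma finf_op : order_preserving_on C finf.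
Proof.
move=> x y Hx Hy Hxy; rewrite /cle.
apply: (cone_lim HC (F := +oo) (u := fun t => gg y t - gg x t)).
  apply: filterS (nbhs_pinfty_gt (num_real 0)) => t t0.
  rewrite /gg -scalerBr; apply: (cone_scale HC); last by rewrite invr_ge0 ltW.
  apply: Hop; try exact: int_scale.
  by rewrite /cle -scalerBr; apply: (cone_scale HC) => //; apply: ltW.
exact: cvgB (finf_cvg Hy) (finf_cvg Hx).
Qed.

Lemma finf_hom : homogeneous_on C finf.
Proof.
move=> x s Hx s0.
have hs : gg (s *: x) @ +oo --> s *: finf x.
  apply/cvgrPdist_lt => e e0.
  have := (cvgrPdist_lt _ _).1 (finf_cvg Hx) (e / s) (divr_gt0 e0 s0).
  case=> M [_ HM].
  exists (`|M| / s); split; first exact: num_real.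
  move=> t Mt.
  have t0 : 0 < t by apply: le_lt_trans Mt; rewrite divr_ge0 // ltW.
  have -> : gg (s *: x) t = s *: gg x (t * s).
    rewrite /gg scalerA scalerA invfM mulrCA mulfV ?gt_eqF // mulr1.
    by rewrite mulrC.
  rewrite -scalerBr normrZ gtr0_norm // -ltr_pdivlMl // [_ * e]mulrC.
  apply: HM; apply: le_lt_trans (ler_norm M) _.
  by rewrite -ltr_pdivrMr.
by rewrite /finf (cvg_lim _ hs).
Qed.

Lemma Mcone_ge0 a x : 0 <= Mcone C a x.
Proof.
rewrite /Mcone; have [[b Hb]|N] := pselect (exists b, 0 < b /\ cle C a (b *: x)).
  by apply: lb_le_inf; [exists b | move=> c [c0 _]; apply: ltW].
have -> : [set b : R | 0 < b /\ cle C a (b *: x)] = set0.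
  by apply/seteqP; split => // b Hb; exfalso; apply: N; exists b.
by rewrite inf0.
Qed.

Lemma Mcone_le a x b : 0 < b -> cle C a (b *: x) -> Mcone C a x <= b.
Proof.
move=> b0 h; apply: ge_inf => //.
by exists 0 => c [c0 _]; apply: ltW.
Qed.

Lemma Mcone_ge a x r : (exists b, 0 < b /\ cle C a (b *: x)) ->
  (forall b, 0 < b -> cle C a (b *: x) -> r <= b) -> r <= Mcone C a x.
Proof. by move=> [b Hb] H; apply: lb_le_inf; [exists b | move=> c [c0 hc]; apply: H]. Qed.

Lemma rcone_le g x : interior C x -> rcone C g <= Mcone C (g x) x.
Proof.
move=> Hx; apply: ge_inf; last by exists x.
by exists 0 => _ [y _ <-]; apply: Mcone_ge0.
Qed.

Lemma rcone_ge g r : interior C !=set0 ->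
  (forall x, interior C x -> r <= Mcone C (g x) x) -> r <= rcone C g.
Proof.
move=> [x0 H0] H; apply: lb_le_inf; first by exists (Mcone C (g x0) x0), x0.
by move=> _ [y Hy <-]; apply: H.
Qed.

Lemma rcone_eq : interior C !=set0 -> rcone C f = rcone C finf.
Proof.
move=> Hne; apply/eqP; rewrite eq_le; apply/andP; split.
  apply: rcone_ge => // y Hy.
  have [b0 b00 Hb0] := int_bound HC (finf y) Hy.
  apply: Mcone_ge; first by exists b0.
  move=> b b0' hb; apply/ler_addgt0Pr => e e0.
  have [d d0 Hd] := int_dom HC Hy e0.
  have [t t0 ht] := pinfty_ex_gt0 ((cvgrPdist_lt _ _).1 (finf_cvg Hy) d d0).
  have h1 : C (e *: y - (gg y t - finf y)) by apply: Hd; rewrite distrC.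
  have h2 : C ((b + e) *: y - gg y t).
    have := cone_add HC h1 hb.
    congr C; rewrite scalerDl.
    rewrite opprB addrACA addrAC [finf y - _ - _]addrAC subrr add0r addrAC [e *: y + _]addrC.
    done.
  apply: le_trans (rcone_le f (int_scale HC Hy t0)) _.
  apply: Mcone_le; first by apply: addr_gt0.
  have := cone_scale HC h2 (ltW t0).
  rewrite /cle scalerBr /gg scalerA [in X in C X -> _]scalerA mulfV ?gt_eqF // scale1r.
  by rewrite scalerA mulrC.
apply: rcone_ge => // y Hy.
apply: le_trans (rcone_le finf Hy) _.
have [b0 b00 Hb0] := int_bound HC (f y) Hy.
apply: Mcone_ge; first by exists b0.
move=> b b0' hb; apply: Mcone_le => //.
exact: cle_trans (finf_le Hy) hb.
Qed.

End Main.

Unset Implicit Arguments.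
Theorem proposition4p9 (R : realType) (V : completeNormedModType R)
  (C : set V) (f : V -> V) :
  is_closed_cone C -> regular_cone C -> interior C !=set0 ->
  (forall x, interior C x -> interior C (f x)) ->
  order_preserving_on C f -> subhomogeneous_on C f ->
  exists finf : V -> V,
    [/\ (forall x, interior C x ->
           (fun t : R => t^-1 *: f (t *: x)) @ +oo --> finf x),
        (forall x, interior C x -> C (finf x)),
        order_preserving_on C finf,
        homogeneous_on C finf &
        rcone C f = rcone C finf].
Proof.
move=> HC Hreg Hne Hf Hop Hsh.
exists (finf f); split.
- by move=> x Hx; apply: (finf_cvg HC Hreg Hf Hsh Hx).
- by move=> x Hx; apply: (finf_in HC Hreg Hf Hsh Hx).
- exact: (finf_op HC Hreg Hf Hop Hsh).
- exact: (finf_hom HC Hreg Hf Hsh).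
- exact: (rcone_eq HC Hreg Hf Hsh Hne).
Qed.
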